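(* Let $w$ be a partial permutation and $i\in\mathbb Z$ such that $w(i)$, $w(i+1)$ and $w(i+2)$ are defined and exactly one of $\overline i,\overline{i+1}$ lies in $R(w)$. Then there exists a unique partial permutation $w'$ connected to $w$ by a Knuth move such that $R(w')$ contains the other of $\overline i,\overline{i+1}$ and not the first one.
   Context: Fix $n\ge1$; $\overline i=i+n\mathbb Z$. A partial permutation is an injection $w:U\to\mathbb Z$, where $U\subseteq\mathbb Z$ satisfies $x\in U\iff x+n\in U$ and $w(i+n)=w(i)+n$. Its right descent set is $R(w)=\{\overline i: w(i)>w(i+1)\}$ (over $i$ with $w(i),w(i+1)$ defined). Two partial permutations $w,w'$ are connected by a Knuth move at position $\overline j$ if $w'(t)=w(t+1)$ and $w'(t+1)=w(t)$ for all $t\equiv j\pmod n$, $w'(t)=w(t)$ for all $t\not\equiv j,j+1\pmod n$, and at least one of $w(j+2),w(j-1)$ lies numerically between $w(j)$ and $w(j+1)$. *)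

(* Defs.v *)
From Stdlib Require Import ZArith.
Open Scope Z_scope.

(* w : Z -> option Z, w x = None means x is not in the domain U. *)
Definition PartialPerm (n : Z) (w : Z -> option Z) : Prop :=
  (forall x, w x <> None <-> w (x + n) <> None) /\
  (forall x a, w x = Some a -> w (x + n) = Some (a + n)) /\
  (forall x y a, w x = Some a -> w y = Some a -> x = y).

Definition defined (w : Z -> option Z) (x : Z) : Prop := exists a, w x = Some a.

(* residue class of j lies in the right descent set R(w) *)
Definition InR (n : Z) (w : Z -> option Z) (j : Z) : Prop :=
  exists i a b, (i - j) mod n = 0 /\ w i = Some a /\ w (i + 1) = Some b /\ a > b.

Definition between (c a b : Z) : Prop := (a < c < b) \/ (b < c < a).

Definition KnuthMove (n : Z) (w w' : Z -> option Z) (j : Z) : Prop :=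
  (forall t, (t - j) mod n = 0 -> w' t = w (t + 1) /\ w' (t + 1) = w t) /\
  (forall t, (t - j) mod n <> 0 -> (t - (j + 1)) mod n <> 0 -> w' t = w t) /\
  (exists a b c, w j = Some a /\ w (j + 1) = Some b /\
     (w (j + 2) = Some c \/ w (j - 1) = Some c) /\ between c a b).

Definition KnuthConnected (n : Z) (w w' : Z -> option Z) : Prop :=
  exists j, KnuthMove n w w' j.

(* Main.v *)
Require Import Defs.
From Stdlib Require Import ZArith Lia FunctionalExtensionality.
Open Scope Z_scope.

Lemma mod0_iff n x : n <> 0 -> (x mod n = 0 <-> exists q, x = q * n).
Proof. intros Hn. rewrite Z.mod_divide by exact Hn. unfold Z.divide. tauto. Qed.

Lemma pp_shift_pos n w : PartialPerm n w -> forall m, 0 <= m -> forall x a, w x = Some a ->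
  w (x + m*n) = Some (a + m*n) /\ w (x - m*n) = Some (a - m*n).
Proof.
  intros [H1 [H2 H3]] m Hm. pattern m; apply natlike_ind; [| |exact Hm].
  - intros x a Hx. rewrite !Z.mul_0_l, !Z.add_0_r, !Z.sub_0_r. auto.
  - intros k Hk IH x a Hx. destruct (IH x a Hx) as [Hp Hq]. split.
    + replace (x + Z.succ k * n) with (x + k*n + n) by ring.
      replace (a + Z.succ k * n) with (a + k*n + n) by ring. apply H2; exact Hp.
    + destruct (w (x - Z.succ k * n)) as [a'|] eqn:E.
      * pose proof (H2 _ _ E) as E'. replace (x - Z.succ k * n + n) with (x - k*n) in E' by ring.
        rewrite Hq in E'. injection E' as E'. f_equal. lia.
      * exfalso. apply (proj2 (H1 (x - Z.succ k * n))); [|exact E].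
        replace (x - Z.succ k * n + n) with (x - k*n) by ring. rewrite Hq. discriminate.
Qed.

Lemma pp_shift n w : PartialPerm n w -> forall m x a, w x = Some a ->
  w (x + m*n) = Some (a + m*n).
Proof.
  intros HP m x a Hx. destruct (Z.le_ge_cases 0 m).
  - apply (pp_shift_pos n w HP m H x a Hx).
  - destruct (pp_shift_pos n w HP (-m) ltac:(lia) x a Hx) as [_ Hq].
    replace (x + m*n) with (x - - m * n) by ring. rewrite Hq. f_equal. ring.
Qed.

Lemma pp_eqm n w x y a : 1 <= n -> PartialPerm n w -> (x - y) mod n = 0 -> w x = Some a ->
  w y = Some (a + (y - x)).
Proof.
  intros Hn HP Hm Hx. apply mod0_iff in Hm; [|lia]. destruct Hm as [q Hq].
  pose proof (pp_shift n w HP (-q) x a Hx) as H.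
  replace (x + - q * n) with y in H by lia. rewrite H. f_equal. lia.
Qed.

Definition descB (o1 o2 : option Z) : Prop :=
  match o1, o2 with Some x, Some y => x > y | _, _ => False end.

Lemma InR_iff n w k : 1 <= n -> PartialPerm n w -> (InR n w k <-> descB (w k) (w (k+1))).
Proof.
  intros Hn HP. split.
  - intros [i' [a [b [Hm [Ha [Hb Hab]]]]]].
    rewrite (pp_eqm n w i' k a Hn HP Hm Ha).
    rewrite (pp_eqm n w (i'+1) (k+1) b Hn HP); [simpl; lia| |exact Hb].
    replace (i' + 1 - (k + 1)) with (i' - k) by ring. exact Hm.
  - intros H. destruct (w k) eqn:E1; destruct (w (k+1)) eqn:E2; simpl in H; try contradiction.
    exists k, z, z0. rewrite Z.sub_diag, Z.mod_0_l by lia. auto.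
Qed.

Definition sig n j t :=
  if (t - j) mod n =? 0 then t + 1 else if (t - (j+1)) mod n =? 0 then t - 1 else t.

Lemma mod_succ_ne n x : 2 <= n -> x mod n = 0 -> (x + 1) mod n <> 0.
Proof.
  intros Hn H. rewrite <- Zplus_mod_idemp_l, H. rewrite Z.mod_small by lia. lia.
Qed.

Lemma sig_shift n j t : 1 <= n -> sig n j (t + n) = sig n j t + n.
Proof.
  intros Hn. unfold sig.
  replace (t + n - j) with ((t - j) + 1*n) by ring.
  replace (t + n - (j+1)) with ((t - (j+1)) + 1*n) by ring.
  rewrite !Z.mod_add by lia.
  destruct (_ =? 0); [ring|]. destruct (_ =? 0); ring.
Qed.

Lemma sig_inv n j t : 2 <= n -> sig n j (sig n j t) = t.
Proof.
  intros Hn. unfold sig at 2.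
  destruct (Z.eqb_spec ((t - j) mod n) 0) as [E|E].
  - unfold sig. replace (t + 1 - j) with ((t - j) + 1) by ring.
    pose proof (mod_succ_ne n _ Hn E) as E2. apply Z.eqb_neq in E2. rewrite E2.
    replace (t + 1 - (j+1)) with (t - j) by ring. rewrite E. simpl. ring.
  - destruct (Z.eqb_spec ((t - (j+1)) mod n) 0) as [F|F].
    + unfold sig. replace (t - 1 - j) with (t - (j+1)) by ring. rewrite F. simpl. ring.
    + unfold sig. apply Z.eqb_neq in E. apply Z.eqb_neq in F. rewrite E, F. reflexivity.
Qed.

Lemma pp_sig n w j : 2 <= n -> PartialPerm n w -> PartialPerm n (fun t => w (sig n j t)).
Proof.
  intros Hn [H1 [H2 H3]]. split; [|split].
  - intros x. rewrite sig_shift by lia. apply H1.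
  - intros x a Hx. rewrite sig_shift by lia. apply H2, Hx.
  - intros x y a Hx Hy. pose proof (H3 _ _ _ Hx Hy) as E.
    rewrite <- (sig_inv n j x Hn), <- (sig_inv n j y Hn), E. reflexivity.
Qed.

Lemma km_eq n w w' j : 2 <= n -> KnuthMove n w w' j -> forall t, w' t = w (sig n j t).
Proof.
  intros Hn [K1 [K2 K3]] t. unfold sig.
  destruct (Z.eqb_spec ((t - j) mod n) 0) as [E|E].
  - apply (K1 t E).
  - destruct (Z.eqb_spec ((t - (j+1)) mod n) 0) as [F|F].
    + assert (F' : (t - 1 - j) mod n = 0) by (replace (t - 1 - j) with (t - (j+1)) by ring; exact F).
      destruct (K1 _ F') as [_ G]. replace (t - 1 + 1) with t in G by ring. exact G.
    + apply K2; assumption.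
Qed.

Definition legal (w : Z -> option Z) j := exists a b c, w j = Some a /\ w (j + 1) = Some b /\
     (w (j + 2) = Some c \/ w (j - 1) = Some c) /\ Defs.between c a b.

Lemma km_build n w j : 2 <= n -> legal w j -> KnuthMove n w (fun t => w (sig n j t)) j.
Proof.
  intros Hn HL. split; [|split].
  - intros t E. unfold sig. rewrite E. simpl. split; [reflexivity|].
    replace (t + 1 - j) with ((t - j) + 1) by ring.
    pose proof (mod_succ_ne n _ Hn E) as E2. apply Z.eqb_neq in E2. rewrite E2.
    replace (t + 1 - (j+1)) with (t - j) by ring. rewrite E. simpl. f_equal. ring.
  - intros t E F. unfold sig. apply Z.eqb_neq in E. apply Z.eqb_neq in F. rewrite E, F. reflexivity.
  - exact HL.
Qed.

Lemma modeq n x j j' : 1 <= n -> (j - j') mod n = 0 -> (x - j) mod n = (x - j') mod n.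
Proof.
  intros Hn H. apply mod0_iff in H; [|lia]. destruct H as [q Hq].
  replace (x - j) with ((x - j') + (-q) * n) by lia. rewrite Z.mod_add by lia. reflexivity.
Qed.

Lemma sig_eqm n j j' t : 1 <= n -> (j - j') mod n = 0 -> sig n j t = sig n j' t.
Proof.
  intros Hn H. unfold sig. rewrite (modeq n t j j' Hn H).
  rewrite (modeq n t (j+1) (j'+1) Hn); [reflexivity|].
  replace (j + 1 - (j' + 1)) with (j - j') by ring. exact H.
Qed.

Lemma legal_eqm n w j j' : 1 <= n -> PartialPerm n w -> (j - j') mod n = 0 -> legal w j -> legal w j'.
Proof.
  intros Hn HP H [a [b [c [Ha [Hb [Hc Hbt]]]]]].
  assert (G : forall k, ((j + k) - (j' + k)) mod n = 0) by
    (intros k; replace (j + k - (j' + k)) with (j - j') by ring; exact H).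
  set (d := j' - j).
  exists (a + d), (b + d), (c + d). split; [|split; [|split]].
  - rewrite (pp_eqm n w j j' a Hn HP H Ha). reflexivity.
  - rewrite (pp_eqm n w (j+1) (j'+1) b Hn HP (G 1) Hb). f_equal. unfold d. ring.
  - destruct Hc as [Hc|Hc]; [left|right].
    + rewrite (pp_eqm n w (j+2) (j'+2) c Hn HP (G 2) Hc). f_equal. unfold d. ring.
    + rewrite (pp_eqm n w (j-1) (j'-1) c Hn HP); [f_equal; unfold d; ring| |exact Hc].
      replace (j - 1 - (j' - 1)) with (j - j') by ring; exact H.
  - unfold Defs.between in *. lia.
Qed.

Lemma modkr n r k : 1 <= n -> 0 <= r < n -> ((k - r) mod n =? 0) = (r =? k mod n).
Proof.
  intros Hn Hr. rewrite <- Zminus_mod_idemp_l.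
  pose proof (Z.mod_pos_bound k n ltac:(lia)) as Hb. set (u := k mod n) in *.
  destruct (Z.eqb_spec r u) as [E|E].
  - subst. rewrite Z.sub_diag, Z.mod_0_l by lia. reflexivity.
  - apply Z.eqb_neq. intro H. apply mod0_iff in H; [|lia]. destruct H as [q Hq].
    destruct (Z.lt_trichotomy q 0) as [Q|[Q|Q]].
    + assert (q * n <= -1 * n) by (apply Z.mul_le_mono_nonneg_r; lia). lia.
    + subst q. lia.
    + assert (1 * n <= q * n) by (apply Z.mul_le_mono_nonneg_r; lia). lia.
Qed.

Lemma sig_i n i r k : 1 <= n -> 0 <= r < n -> sig n (i + r) (i + k) =
  if r =? k mod n then i+k+1 else if r =? (k-1) mod n then i+k-1 else i+k.
Proof.
  intros Hn Hr. unfold sig.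
  replace (i + k - (i + r)) with (k - r) by ring.
  replace (i + k - (i + r + 1)) with ((k-1) - r) by ring.
  rewrite !modkr by assumption. reflexivity.
Qed.

Definition Tgt a b c i (w' : Z -> option Z) :=
  (a > b -> descB (w' (i+1)) (w' (i+2)) /\ ~ descB (w' i) (w' (i+1))) /\
  (b > c -> descB (w' i) (w' (i+1)) /\ ~ descB (w' (i+1)) (w' (i+2))).

Definition r0 a b c := if b <? a then (if c <? a then 0 else 1) else (if a <? c then 0 else 1).

Ltac dest_h H := repeat match type of H with context [?x =? ?y] => destruct (Z.eqb_spec x y) end.
Ltac dest_g := repeat match goal with |- context [?x =? ?y] => destruct (Z.eqb_spec x y) end.
Ltac inj := repeat match goal with H : Some _ = Some _ |- _ => injection H as H end.

Ltac norm_idx i :=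
  let E1 := fresh in let E2 := fresh in let E3 := fresh in let E4 := fresh in
  assert (E1 : i+1+1 = i+2) by ring; assert (E2 : i+1+2 = i+3) by ring;
  assert (E3 : i+1-1 = i) by ring; assert (E4 : i + 0 = i) by ring;
  rewrite ?E1, ?E2, ?E3, ?E4 in *; clear E1 E2 E3 E4;
  let F1 := fresh in let F2 := fresh in let F3 := fresh in
  assert (F1 : i+2+1 = i+3) by ring; assert (F2 : i+2+2 = i+4) by ring;
  assert (F3 : i+2-1 = i+1) by ring; rewrite ?F1, ?F2, ?F3 in *; clear F1 F2 F3.

Ltac ords a b c := unfold r0 in *; destruct (Z.ltb_spec b a); destruct (Z.ltb_spec c a); destruct (Z.ltb_spec a c).

Ltac witness i := unfold legal; norm_idx i; first
  [ eexists _,_,_; split;[eassumption|split;[eassumption|split;[left;eassumption|unfold Defs.between; lia]]]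
  | eexists _,_,_; split;[eassumption|split;[eassumption|split;[right;eassumption|unfold Defs.between; lia]]] ].

Ltac fin_case i a b c :=
  norm_idx i;
  split;
  [ intros [[a' [b' [c' [L1 [L2 [L3 L4]]]]]] HT]; norm_idx i;
    destruct L3 as [L3|L3];
    repeat match goal with H : ?w ?x = Some _, L : ?w ?x = Some _ |- _ => rewrite H in L end;
    repeat match goal with H : ?w ?x = Some _, L : context [?w ?x] |- _ => rewrite H in L end;
    simpl in *; inj; unfold Defs.between in L4; ords a b c; lia
  | intros Hr0; ords a b c; try lia; (split;
    [ witness i
    | repeat match goal with H : ?w ?x = Some _ |- context [?w ?x] => rewrite H end; simpl; lia ]) ].

Lemma core n w i a b c r : 2 <= n -> PartialPerm n w -> w i = Some a -> w (i+1) = Some b ->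
  w (i+2) = Some c -> (a > b <-> ~ b > c) -> 0 <= r < n ->
  (legal w (i + r) /\ Tgt a b c i (fun t => w (sig n (i+r) t)) <-> r = r0 a b c).
Proof.
  intros Hn HP Ha Hb Hc Hx Hr.
  assert (H1n : 1 <= n) by lia.
  assert (Dab : a <> b) by (intro E; subst; destruct HP as [_ [_ HI]]; pose proof (HI _ _ _ Ha Hb); lia).
  assert (Dbc : b <> c) by (intro E; subst; destruct HP as [_ [_ HI]]; pose proof (HI _ _ _ Hb Hc); lia).
  assert (Dac : a <> c) by (intro E; subst; destruct HP as [_ [_ HI]]; pose proof (HI _ _ _ Ha Hc); lia).
  assert (s0 : sig n (i + r) i = if r =? 0 mod n then i + 1 else if r =? (0 - 1) mod n then i - 1 else i).
  { pose proof (sig_i n i r 0 H1n Hr) as E. rewrite Z.add_0_r in E. exact E. }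
  assert (s1 : sig n (i + r) (i+1) = if r =? 1 mod n then i + 2 else if r =? (1 - 1) mod n then i else i + 1).
  { pose proof (sig_i n i r 1 H1n Hr) as E. rewrite E. replace (i+1+1) with (i+2) by ring.
    replace (i+1-1) with i by ring. reflexivity. }
  assert (s2 : sig n (i + r) (i+2) = if r =? 2 mod n then i + 3 else if r =? (2 - 1) mod n then i + 1 else i + 2).
  { pose proof (sig_i n i r 2 H1n Hr) as E. rewrite E. replace (i+2+1) with (i+3) by ring.
    replace (i+2-1) with (i+1) by ring. reflexivity. }
  unfold Tgt. rewrite s0, s1, s2. clear s0 s1 s2.
  destruct (Z.eq_dec n 2) as [N2|N2]; [|destruct (Z.eq_dec n 3) as [N3|N3]].
  - subst n.
    assert (Ec : c = a + 2).
    { pose proof (pp_shift 2 w HP 1 i a Ha) as E. replace (i + 1*2) with (i+2) in E by ring. rewrite Hc in E. injection E; lia. }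
    assert (H3 : w (i+3) = Some (b+2)).
    { pose proof (pp_shift 2 w HP 1 (i+1) b Hb) as E. replace (i + 1 + 1*2) with (i+3) in E by ring. rewrite E. f_equal; ring. }
    assert (Hm1 : w (i-1) = Some (b-2)).
    { pose proof (pp_shift 2 w HP (-1) (i+1) b Hb) as E. replace (i + 1 + -1*2) with (i-1) in E by ring. rewrite E. f_equal; ring. }
    subst c.
    assert (r = 0 \/ r = 1) as [-> | ->] by lia.
    + simpl. fin_case i a b (a+2).
    + simpl. fin_case i a b (a+2).
  - subst n.
    assert (H3 : w (i+3) = Some (a+3)).
    { pose proof (pp_shift 3 w HP 1 i a Ha) as E. replace (i + 1*3) with (i+3) in E by ring. rewrite E. f_equal; ring. }
    assert (Hm1 : w (i-1) = Some (c-3)).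
    { pose proof (pp_shift 3 w HP (-1) (i+2) c Hc) as E. replace (i + 2 + -1*3) with (i-1) in E by ring. rewrite E. f_equal; ring. }
    assert (r = 0 \/ r = 1 \/ r = 2) as [-> | [-> | ->]] by lia.
    all: simpl; fin_case i a b c.
  - assert (Hn4 : 4 <= n) by lia.
    assert (C0 : 0 mod n = 0) by (apply Z.mod_0_l; lia).
    assert (C1 : 1 mod n = 1) by (apply Z.mod_small; lia).
    assert (C2 : 2 mod n = 2) by (apply Z.mod_small; lia).
    assert (Cm : (0 - 1) mod n = n - 1) by (symmetry; apply (Z.mod_unique _ _ (-1)); lia).
    assert (C11 : (1 - 1) mod n = 0) by (rewrite Z.sub_diag; exact C0).
    assert (C21 : (2 - 1) mod n = 1) by (apply Z.mod_small; lia).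
    rewrite C0, C1, C2, Cm, C11, C21.
    dest_g; try (exfalso; lia);
    try subst r;
    destruct (w (i-1)) eqn:?; destruct (w (i+3)) eqn:?; simpl; fin_case i a b c.
Qed.

Theorem proposition3p8 (n : Z) (w : Z -> option Z) (i : Z) :
  1 <= n ->
  PartialPerm n w ->
  defined w i -> defined w (i + 1) -> defined w (i + 2) ->
  (InR n w i <-> ~ InR n w (i + 1)) ->
  exists! w' : Z -> option Z,
    PartialPerm n w' /\ KnuthConnected n w w' /\
    (InR n w i -> InR n w' (i + 1) /\ ~ InR n w' i) /\
    (InR n w (i + 1) -> InR n w' i /\ ~ InR n w' (i + 1)).
Proof.
  intros Hn HP [a Ha] [b Hb] [c Hc] Hex.
  assert (Ri : InR n w i <-> a > b).
  { rewrite InR_iff by auto. rewrite Ha, Hb. simpl. tauto. }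
  assert (Ri1 : InR n w (i+1) <-> b > c).
  { rewrite InR_iff by auto. replace (i+1+1) with (i+2) by ring. rewrite Hb, Hc. simpl. tauto. }
  rewrite Ri, Ri1 in Hex.
  destruct (Z.eq_dec n 1) as [N1|N1].
  { subst n. exfalso. pose proof (pp_shift 1 w HP 1 i a Ha) as E.
    replace (i+1*1) with (i+1) in E by ring. rewrite Hb in E. injection E as E.
    pose proof (pp_shift 1 w HP 1 (i+1) b Hb) as E2.
    replace (i+1+1*1) with (i+2) in E2 by ring. rewrite Hc in E2. injection E2 as E2.
    destruct Hex as [X1 X2]. lia. }
  assert (Hn2 : 2 <= n) by lia.
  set (R := r0 a b c).
  assert (HR : 0 <= R < n) by (unfold R, r0; destruct (_ <? _); destruct (_ <? _); lia).
  pose proof (core n w i a b c R Hn2 HP Ha Hb Hc Hex HR) as [_ Hcore].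
  destruct (Hcore eq_refl) as [HL HT].
  pose proof (pp_sig n w (i+R) Hn2 HP) as PP'.
  exists (fun t => w (sig n (i+R) t)). split.
  - split; [exact PP'|]. split; [exists (i+R); apply km_build; auto|].
    rewrite Ri, Ri1.
    rewrite (InR_iff n _ i Hn PP'), (InR_iff n _ (i+1) Hn PP').
    replace (i+1+1) with (i+2) by ring. exact HT.
  - intros w'' [PP'' [[j KM] [C1 C2]]].
    pose proof (Z.mod_pos_bound (j - i) n ltac:(lia)) as Hr.
    set (r := (j - i) mod n) in *.
    assert (Hjr : (j - (i + r)) mod n = 0).
    { replace (j - (i + r)) with ((j - i) / n * n) by (unfold r; rewrite Z.mod_eq by lia; ring).
      apply Z.mod_mul; lia. }
    assert (HL' : legal w (i + r)).
    { apply (legal_eqm n w j (i + r) Hn HP Hjr). destruct KM as [_ [_ K3]]. exact K3. }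
    assert (Heq : forall t, w'' t = w (sig n (i+r) t)).
    { intros t. rewrite (km_eq n w w'' j Hn2 KM t). rewrite (sig_eqm n j (i+r) t Hn Hjr). reflexivity. }
    assert (HT' : Tgt a b c i (fun t => w (sig n (i+r) t))).
    { rewrite Ri, Ri1 in *.
      rewrite (InR_iff n _ i Hn PP''), (InR_iff n _ (i+1) Hn PP'') in C1, C2.
      replace (i+1+1) with (i+2) in C1, C2 by ring. rewrite !Heq in C1, C2.
      unfold Tgt. split; assumption. }
    pose proof (proj1 (core n w i a b c r Hn2 HP Ha Hb Hc Hex Hr) (conj HL' HT')) as ER.
    apply functional_extensionality. intros t. rewrite Heq. fold R in ER. rewrite ER. reflexivity.
Qed.
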